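(* The tree $T_A$ has proper thinness equal to $3$.
   Context: For a graph $G=(V,E)$, a linear ordering $<$ of $V$ and a partition of $V$ into classes are called strongly consistent if for every triple $r<s<t$ of vertices with $rt\in E$: if $r$ and $s$ belong to the same class then $st\in E$, and if $s$ and $t$ belong to the same class then $rs\in E$. The proper thinness $\mathrm{pthin}(G)$ is the minimum $k$ such that some ordering of $V$ and some partition of $V$ into $k$ classes are strongly consistent. $T_0$ is the subdivided star $K_{1,5}$: a center adjacent to five vertices, each of which is adjacent to one further leaf (11 vertices). $T_A$ is the tree obtained from three disjoint copies of $T_0$ and a new vertex $v_0$ by making $v_0$ adjacent to one leaf of each copy (34 vertices; $v_0$ is at distance $3$ from each copy's center). *)

(* Defs.v *)
From mathcomp Require Import all_boot.
Set Implicit Arguments. Unset Strict Implicit. Unset Printing Implicit Defensive.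

(* A simple graph on a finite vertex type T is given by an edge relation e
   (intended symmetric and irreflexive).
   A linear ordering of V is given by an injective map ord : T -> nat
   (r < s  iff  ord r < ord s); a partition of V into (at most) k classes
   is given by a class map cls : T -> 'I_k. *)

Definition strongly_consistent (T : finType) (e : rel T)
    (ord : T -> nat) (k : nat) (cls : T -> 'I_k) : Prop :=
  forall r s t : T, ord r < ord s -> ord s < ord t -> e r t ->
    (cls r = cls s -> e s t) /\ (cls s = cls t -> e r s).

Definition proper_k_thin (T : finType) (e : rel T) (k : nat) : Prop :=
  exists (ord : T -> nat) (cls : T -> 'I_k),
    injective ord /\ strongly_consistent e ord cls.

Definition pthin_eq (T : finType) (e : rel T) (k : nat) : Prop :=
  proper_k_thin e k /\ forall k', proper_k_thin e k' -> k <= k'.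

(* T_0: subdivided star K_{1,5} on 'I_11: center 0, middle vertices 1..5,
   leaf j+5 attached to middle vertex j. *)
Definition T0_arc (x y : 'I_11) : bool :=
  ((val x == 0) && (1 <= val y <= 5)) ||
  ((1 <= val x <= 5) && (val y == val x + 5)).

Definition T0_edge (x y : 'I_11) : bool := T0_arc x y || T0_arc y x.

(* T_A: vertices are None (= v_0) and Some (i, x) = vertex x of copy i.
   v_0 is adjacent to the leaf 6 of each copy. *)
Definition TA_vertex := option ('I_3 * 'I_11)%type.

Definition TA_edge (u v : TA_vertex) : bool :=
  match u, v with
  | Some (i, x), Some (j, y) => (i == j) && T0_edge x y
  | None, Some (_, y) => val y == 6
  | Some (_, x), None => val x == 6
  | None, None => false
  end.

(* Main.v *)
Require Import Defs.
From mathcomp Require Import all_boot zify.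
Set Implicit Arguments. Unset Strict Implicit. Unset Printing Implicit Defensive.


Definition e0 (x y : nat) : bool :=
  match x with
  | 0 => match y with 1 | 2 | 3 | 4 | 5 => true | _ => false end
  | 1 => match y with 0 | 6 => true | _ => false end
  | 2 => match y with 0 | 7 => true | _ => false end
  | 3 => match y with 0 | 8 => true | _ => false end
  | 4 => match y with 0 | 9 => true | _ => false end
  | 5 => match y with 0 | 10 => true | _ => false end
  | 6 => match y with 1 => true | _ => false end
  | 7 => match y with 2 => true | _ => false end
  | 8 => match y with 3 => true | _ => false end
  | 9 => match y with 4 => true | _ => false end
  | 10 => match y with 5 => true | _ => false end
  | _ => false end.

Definition tcond (r : nat) (cr : bool) (t : nat) (ct : bool) (sc : nat * bool) : bool :=
  if (cr == sc.2) && ~~ e0 sc.1 t then false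
  else if (sc.2 == ct) && ~~ e0 r sc.1 then false else true.
Fixpoint okt (p : seq (nat*bool)) (t : nat) (ct : bool) : bool :=
  match p with
  | [::] => true
  | (r,cr)::p' => if e0 r t then (if all (tcond r cr t ct) p' then okt p' t ct else false)
                  else okt p' t ct
  end.
Definition allowed (p : seq (nat*bool)) (t : nat) : bool :=
  let vs := map fst p in
  (t \notin vs) && ((2 <= t <= 5) ==> (t.-1 \in vs)) && ((t == 3) ==> (0 \in vs)).
Definition cands (p : seq (nat*bool)) : seq bool := if p is [::] then [:: false] else [:: true; false].
Fixpoint search (f : nat) (p : seq (nat*bool)) : bool :=
  match f with
  | 0 => true
  | f'.+1 => has (fun t => if allowed p t then has (fun c => if okt p t c then search f' (rcons p (t,c)) else false) (cands p) else false) (iota 0 11)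
  end.

Lemma search_false : search 11 [::] = false.
Proof. vm_cast_no_check (erefl false). Qed.

Fixpoint vfrom (p rest : seq (nat*bool)) : bool :=
  match rest with
  | [::] => true
  | (t,c)::r => [&& t < 11, allowed p t, c \in cands p, okt p t c & vfrom (rcons p (t,c)) r]
  end.

Lemma search_complete rest p : vfrom p rest -> search (size rest) p.
Proof.
elim: rest p => [|[t c] r IH] p; first by [].
move=> H; case/and5P: H => ht ha hc ho hv.
apply/hasP; exists t; first by rewrite mem_iota.
rewrite ha; apply/hasP; exists c => //; rewrite ho; exact: IH.
Qed.

Definition good (ord : nat -> nat) (cls : nat -> bool) : Prop :=
  (forall x y, x < 11 -> y < 11 -> ord x = ord y -> x = y) /\
  (forall r s t, r < 11 -> s < 11 -> t < 11 -> ord r < ord s -> ord s < ord t -> e0 r t ->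
     (cls r = cls s -> e0 s t) /\ (cls s = cls t -> e0 r s)).

Lemma mi x : x < 11 -> x \in iota 0 11.
Proof. by rewrite mem_iota. Qed.

Lemma fin2 (P : nat -> nat -> bool) :
  all (fun x => all (P x) (iota 0 11)) (iota 0 11) -> forall x y, x < 11 -> y < 11 -> P x y.
Proof.
move=> /allP H x y hx hy.
by move/allP: (H x (mi hx)) => /(_ y (mi hy)).
Qed.

Lemma e0C x y : x < 11 -> y < 11 -> e0 x y = e0 y x.
Proof.
by move=> hx hy; apply/eqP; apply: (fin2 (P := fun x y => e0 x y == e0 y x)).
Qed.

Definition gp (p : seq nat) (x : nat) : nat :=
  if x == 0 then 0 else if x <= 5 then nth 0 p x.-1
  else if x <= 10 then (nth 0 p (x - 6)) + 5 else x.

Definition autb (p : seq nat) : bool :=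
  all (fun x => (gp p x < 11) && all (fun y => ((gp p x == gp p y) ==> (x == y)) &&
     (e0 (gp p x) (gp p y) == e0 x y)) (iota 0 11)) (iota 0 11).

Lemma all_aut : all autb (permutations [:: 1; 2; 3; 4; 5]).
Proof. by vm_compute. Qed.

Lemma autbP p : autb p ->
  (forall x, x < 11 -> gp p x < 11) /\
  (forall x y, x < 11 -> y < 11 -> gp p x = gp p y -> x = y) /\
  (forall x y, x < 11 -> y < 11 -> e0 (gp p x) (gp p y) = e0 x y).
Proof.
move=> /allP H; split; [|split].
- by move=> x hx; case/andP: (H x (mi hx)).
- move=> x y hx hy e; case/andP: (H x (mi hx)) => _ /allP /(_ y (mi hy)).
  by rewrite e eqxx /= => /andP [/eqP].
- move=> x y hx hy; case/andP: (H x (mi hx)) => _ /allP /(_ y (mi hy)).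
  by case/andP => _ /eqP.
Qed.

Lemma good_relabel p ord cls : autb p -> good ord cls -> good (ord \o gp p) (cls \o gp p).
Proof.
move=> /autbP [h1 [h2 h3]] [I G]; split.
- by move=> x y hx hy /= e; apply: h2 => //; apply: I => //; apply: h1.
- move=> r s t hr hs ht /= o1 o2 e.
  have := G _ _ _ (h1 _ hr) (h1 _ hs) (h1 _ ht) o1 o2; rewrite !h3 //.
  by apply.
Qed.

Lemma good_rev ord cls M : (forall x, x < 11 -> ord x <= M) -> good ord cls ->
  good (fun x => M - ord x) cls.
Proof.
move=> hM [I G]; split.
- move=> x y hx hy e; apply: I => //; have := hM x hx; have := hM y hy; lia.
- move=> r s t hr hs ht o1 o2 e.
  have hr' := hM r hr; have hs' := hM s hs; have ht' := hM t ht.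
  have := G t s r ht hs hr ltac:(lia) ltac:(lia); rewrite e0C // => /(_ e) [a b].
  split=> h.
  + by rewrite e0C //; apply: b.
  + by rewrite e0C //; apply: a.
Qed.

Lemma good_flip ord cls b : good ord cls -> good ord (fun x => cls x (+) b).
Proof.
move=> [I G]; split=> // r s t hr hs ht o1 o2 e.
have [a c] := G r s t hr hs ht o1 o2 e.
have K u v : u (+) b = v (+) b -> u = v by case: b; case: u; case: v.
by split=> /K.
Qed.

Lemma mapfst (cls : nat -> bool) p : [seq z.1 | z <- [seq (x, cls x) | x <- p]] = p.
Proof. by elim: p => //= x p ->. Qed.

Lemma okt_ok ord cls p t : good ord cls -> all (fun x => x < 11) p -> t < 11 ->
  pairwise (fun x y => ord x < ord y) p -> all (fun x => ord x < ord t) p ->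
  okt [seq (x, cls x) | x <- p] t (cls t).
Proof.
move=> [_ G]; elim: p => [|r p IH] //= /andP[hr hp] ht /andP[hall hpw] /andP[hrt hpt].
have rest : okt [seq (x, cls x) | x <- p] t (cls t) by apply: IH.
case: ifP => // ert.
have -> // : all (tcond r (cls r) t (cls t)) [seq (x, cls x) | x <- p].
apply/allP => [[s cs]] /mapP [s' hs' [-> ->]].
have hs11 : s' < 11 by move/allP: hp => /(_ s' hs').
have o1 : ord r < ord s' by move/allP: hall => /(_ s' hs').
have o2 : ord s' < ord t by move/allP: hpt => /(_ s' hs').
have [h1 h2] := G r s' t hr hs11 ht o1 o2 ert.
rewrite /tcond /=.
case E1: (cls r == cls s'); case E2: (cls s' == cls t) => //=;
  by rewrite ?(h1 (eqP E1)) ?(h2 (eqP E2)).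
Qed.

Lemma vfrom_ok ord cls s : good ord cls -> (forall x, x < 11 -> x \in s) ->
  all (fun x => x < 11) s -> uniq s -> pairwise (fun x y => ord x < ord y) s ->
  (forall k, 2 <= k <= 5 -> ord k.-1 < ord k) -> ord 0 < ord 3 -> cls (head 0 s) = false ->
  forall p rest, p ++ rest = s -> vfrom [seq (x, cls x) | x <- p] [seq (x, cls x) | x <- rest].
Proof.
move=> Hg Hin Hall Hu Hpw Hmid H03 Hhd p rest.
elim: rest p => [|t r IH] p Hs //=.
have ht : t < 11 by move/allP: Hall => /(_ t); rewrite -Hs mem_cat inE eqxx orbT; apply.
have hpw := Hpw; rewrite -Hs pairwise_cat pairwise_cons in hpw.
case/and3P: hpw => hrel hpwp /andP [htr _].
have hpt : all (fun x => ord x < ord t) p.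
  apply/allP => x hx; move/allP: hrel => /(_ x hx) /=; by case/andP.
have before y : y < 11 -> ord y < ord t -> y \in p.
  move=> hy oy; have := Hin y hy; rewrite -Hs mem_cat inE; case/or3P => // [/eqP e|hyr].
    by rewrite e ltnn in oy.
  by move/allP: htr => /(_ y hyr) => oty; have := ltn_trans oy oty; rewrite ltnn.
have hu := Hu; rewrite -Hs cat_uniq /= in hu.
case/and4P: hu => _ /norP [htp _] _ _.
apply/and5P; split => //.
- rewrite /allowed mapfst htp /=; apply/andP; split; apply/implyP.
  + move=> /andP [h2 h5]; apply: before; first lia.
    by apply: Hmid; rewrite h2.
  + by move/eqP => e; apply: before => //; rewrite e.
- have Hh : p = [::] -> cls t = false by move=> e; move: Hhd; rewrite -Hs e.
  case: p Hh {Hs before hpt hrel hpwp htp IH} => [|x p] Hh /=; last by case: (cls t).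
  by rewrite Hh.
- apply: (okt_ok Hg) => //.
  by apply/allP => x hx; move/allP: Hall => /(_ x); rewrite -Hs mem_cat hx; apply.
- rewrite -map_rcons; apply: IH; by rewrite cat_rcons.
Qed.


Lemma stage1 ord cls : good ord cls ->
  exists ord1 cls1, good ord1 cls1 /\ forall k, 2 <= k <= 5 -> ord1 k.-1 < ord1 k.
Proof.
move=> Hg.
set pi := sort (fun i j => ord i <= ord j) [:: 1; 2; 3; 4; 5].
have hpi : pi \in permutations [:: 1; 2; 3; 4; 5] by rewrite mem_permutations perm_sort perm_refl.
have ha : autb pi by move/allP: all_aut => /(_ _ hpi).
have G1 := good_relabel ha Hg.
exists (ord \o gp pi), (cls \o gp pi); split => //.
have Hs : sorted (fun i j => ord i <= ord j) pi.
  by apply: sort_sorted => x y; apply: leq_total.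
have Hsz : size pi = 5 by rewrite size_sort.
move/(sortedP 0): Hs; rewrite Hsz => Hs.
have le k : 2 <= k <= 5 -> ord (gp pi k.-1) <= ord (gp pi k).
  case: k => [|[|[|[|[|[|k]]]]]] // _; rewrite /gp /=.
  - exact: (Hs 0).
  - exact: (Hs 1).
  - exact: (Hs 2).
  - exact: (Hs 3).
move=> k hk; rewrite /= ltn_neqAle le // andbT.
apply/eqP => e; case: G1 => I _.
have := I k.-1 k ltac:(lia) ltac:(lia) e; lia.
Qed.

Lemma stage2 ord cls : good ord cls -> (forall k, 2 <= k <= 5 -> ord k.-1 < ord k) ->
  exists ord2 cls2, [/\ good ord2 cls2, (forall k, 2 <= k <= 5 -> ord2 k.-1 < ord2 k) & ord2 0 < ord2 3].
Proof.
move=> Hg Hm.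
case: (ltngtP (ord 0) (ord 3)) => h.
- by exists ord, cls.
- set rho := [:: 5; 4; 3; 2; 1].
  have ha : autb rho by vm_compute.
  set M := \sum_(i <- iota 0 11) ord i.
  have hM : forall x, x < 11 -> ord x <= M.
    move=> x hx; rewrite /M (bigD1_seq x) ?mi ?iota_uniq //=; exact: leq_addr.
  have hM' : forall x, x < 11 -> (ord \o gp rho) x <= M.
    by move=> x hx; apply: hM; case/autbP: ha => h1 _; apply: h1.
  exists (fun x => M - (ord \o gp rho) x), (cls \o gp rho); split.
  + exact: good_rev hM' (good_relabel ha Hg).
  + have m2 := Hm 2 isT; have m3 := Hm 3 isT; have m4 := Hm 4 isT; have m5 := Hm 5 isT.
    have b1 := hM 1 isT; have b2 := hM 2 isT; have b3 := hM 3 isT; have b4 := hM 4 isT; have b5 := hM 5 isT.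
    case => [|[|[|[|[|[|k]]]]]] // _; rewrite /gp /=; simpl in *; lia.
  + have b0 := hM 0 isT; have b3 := hM 3 isT. rewrite /gp /=; simpl in *; lia.
- by case: Hg => I _; have := I 0 3 isT isT h.
Qed.

Lemma noT0 ord cls : ~ good ord cls.
Proof.
move=> Hg.
have [ord1 [cls1 [G1 M1]]] := stage1 Hg.
have [ord2 [cls2 [G2 M2 C2]]] := stage2 G1 M1.
set s := sort (fun x y => ord2 x <= ord2 y) (iota 0 11).
have G3 := good_flip (cls2 (head 0 s)) G2.
have Hin : forall x, x < 11 -> x \in s by move=> x hx; rewrite mem_sort mi.
have Hall : all (fun x => x < 11) s by apply/allP => x; rewrite mem_sort mem_iota.
have Hu : uniq s by rewrite sort_uniq iota_uniq.
have Hpw : pairwise (fun x y => ord2 x < ord2 y) s.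
  have Hle : pairwise (fun x y => ord2 x <= ord2 y) s.
    rewrite -sorted_pairwise; first by apply: sort_sorted => x y; apply: leq_total.
    by move=> y x z; apply: leq_trans.
  have Hne := Hu; rewrite uniq_pairwise in Hne.
  have H2 : pairwise (fun x y => (x != y) && (ord2 x <= ord2 y)) s.
    by have := pairwise_relI (fun x y => x != y) (fun x y => ord2 x <= ord2 y) s; rewrite Hne Hle => ->.
  apply: (sub_in_pairwise (P := fun x => x < 11)) H2 => //.
  move=> x y hx hy /andP [ne le]; rewrite ltn_neqAle le andbT.
  apply/eqP => e; case: G2 => I _; by move/eqP: ne; apply; apply: I.
have V := vfrom_ok G3 Hin Hall Hu Hpw M2 C2 (addbb _) (p := [::]) (erefl s).
have := search_complete V; rewrite size_map size_sort size_iota search_false.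
by [].
Qed.


Lemma e0_T0 x y : x < 11 -> y < 11 ->
  T0_edge (inord x) (inord y) = e0 x y.
Proof.
move=> hx hy; have vx : val (inord x : 'I_11) = x := inordK hx.
have vy : val (inord y : 'I_11) = y := inordK hy.
rewrite /T0_edge /T0_arc vx vy.
apply/eqP; move: x y hx hy {vx vy}; apply: (fin2 (P := fun x y =>
 (((x == 0) && (1 <= y <= 5)) || ((1 <= x <= 5) && (y == x + 5))
  || (((y == 0) && (1 <= x <= 5)) || ((1 <= y <= 5) && (x == y + 5)))) == e0 x y)).
by vm_compute.
Qed.

Lemma cls2 k (hk : k < 3) (a b : 'I_k) : (val a == 0) = (val b == 0) -> a = b.
Proof.
move=> h; change ((nat_of_ord a == 0) = (nat_of_ord b == 0)) in h.
apply: val_inj; change (nat_of_ord a = nat_of_ord b).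
have ha := ltn_ord a; have hb := ltn_ord b.
case: (nat_of_ord a =P 0) h => [ea|na]; case: (nat_of_ord b =P 0) => [eb|nb] //= h'; try discriminate; lia.
Qed.

Lemma lower k : proper_k_thin TA_edge k -> 3 <= k.
Proof.
case=> ord [cls [inj sc]].
rewrite leqNgt; apply/negP => hk.
pose v x : TA_vertex := Some (ord0, inord x).
apply: (@noT0 (fun x => ord (v x)) (fun x => val (cls (v x)) == 0)); split.
- move=> x y hx hy /inj [] /(congr1 val); rewrite /= !inordK //.
- move=> r s t hr hs ht o1 o2 e.
  have E : forall x y, x < 11 -> y < 11 -> TA_edge (v x) (v y) = e0 x y.
    move=> x y hx hy; change (((ord0 : 'I_3) == ord0) && T0_edge (inord x) (inord y) = e0 x y).
    by rewrite eqxx /= e0_T0.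
  rewrite -E // in e.
  have [a b] := sc _ _ _ o1 o2 e.
  split=> /(cls2 hk) h; rewrite -E //.
  + by apply: a.
  + by apply: b.
Qed.


Definition LA : seq TA_vertex := [:: Some (@Ordinal 3 0 isT, @Ordinal 11 8 isT);
 Some (@Ordinal 3 0 isT, @Ordinal 11 3 isT);
 Some (@Ordinal 3 0 isT, @Ordinal 11 10 isT);
 Some (@Ordinal 3 0 isT, @Ordinal 11 9 isT);
 Some (@Ordinal 3 0 isT, @Ordinal 11 4 isT);
 Some (@Ordinal 3 0 isT, @Ordinal 11 2 isT);
 Some (@Ordinal 3 0 isT, @Ordinal 11 0 isT);
 Some (@Ordinal 3 0 isT, @Ordinal 11 7 isT);
 Some (@Ordinal 3 0 isT, @Ordinal 11 5 isT);
 Some (@Ordinal 3 1 isT, @Ordinal 11 2 isT);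
 Some (@Ordinal 3 1 isT, @Ordinal 11 7 isT);
 Some (@Ordinal 3 1 isT, @Ordinal 11 10 isT);
 Some (@Ordinal 3 1 isT, @Ordinal 11 5 isT);
 Some (@Ordinal 3 0 isT, @Ordinal 11 1 isT);
 Some (@Ordinal 3 0 isT, @Ordinal 11 6 isT);
 Some (@Ordinal 3 1 isT, @Ordinal 11 1 isT);
 None;
 Some (@Ordinal 3 1 isT, @Ordinal 11 0 isT);
 Some (@Ordinal 3 1 isT, @Ordinal 11 6 isT);
 Some (@Ordinal 3 2 isT, @Ordinal 11 6 isT);
 Some (@Ordinal 3 1 isT, @Ordinal 11 3 isT);
 Some (@Ordinal 3 1 isT, @Ordinal 11 8 isT);
 Some (@Ordinal 3 1 isT, @Ordinal 11 9 isT);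
 Some (@Ordinal 3 1 isT, @Ordinal 11 4 isT);
 Some (@Ordinal 3 2 isT, @Ordinal 11 2 isT);
 Some (@Ordinal 3 2 isT, @Ordinal 11 7 isT);
 Some (@Ordinal 3 2 isT, @Ordinal 11 0 isT);
 Some (@Ordinal 3 2 isT, @Ordinal 11 4 isT);
 Some (@Ordinal 3 2 isT, @Ordinal 11 9 isT);
 Some (@Ordinal 3 2 isT, @Ordinal 11 1 isT);
 Some (@Ordinal 3 2 isT, @Ordinal 11 8 isT);
 Some (@Ordinal 3 2 isT, @Ordinal 11 3 isT);
 Some (@Ordinal 3 2 isT, @Ordinal 11 10 isT);
 Some (@Ordinal 3 2 isT, @Ordinal 11 5 isT)].
Definition CA : seq 'I_3 := [:: @Ordinal 3 1 isT; @Ordinal 3 1 isT; @Ordinal 3 0 isT; @Ordinal 3 2 isT; @Ordinal 3 2 isT; @Ordinal 3 2 isT; @Ordinal 3 1 isT; @Ordinal 3 2 isT; @Ordinal 3 0 isT; @Ordinal 3 0 isT; @Ordinal 3 2 isT; @Ordinal 3 2 isT; @Ordinal 3 2 isT; @Ordinal 3 1 isT; @Ordinal 3 1 isT; @Ordinal 3 2 isT; @Ordinal 3 1 isT; @Ordinal 3 0 isT; @Ordinal 3 2 isT; @Ordinal 3 2 isT; @Ordinal 3 1 isT; @Ordinal 3 1 isT; @Ordinal 3 1 isT; @Ordinal 3 0 isT; @Ordinal 3 1 isT; @Ordinal 3 0 isT; @Ordinal 3 1 isT; @Ordinal 3 0 isT; @Ordinal 3 0 isT; @Ordinal 3 2 isT;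 @Ordinal 3 0 isT; @Ordinal 3 2 isT; @Ordinal 3 0 isT; @Ordinal 3 2 isT].
Definition ordA (x : TA_vertex) : nat := index x LA.
Definition clsA (x : TA_vertex) : 'I_3 := nth ord0 CA (index x LA).

Lemma memLA x : x \in LA.
Proof.
case: x => [[[i Hi] [j Hj]]|]; last by [].
do 3 (case: i Hi => [|i] Hi; [do 11 (case: j Hj => [|j] Hj; [by vm_compute|]); by []|]).
by [].
Qed.

Definition Pc r s t : bool := (ordA r < ordA s) ==> (ordA s < ordA t) ==> TA_edge r t ==>
     ((clsA r == clsA s) ==> TA_edge s t) && ((clsA s == clsA t) ==> TA_edge r s).

Lemma upper : proper_k_thin TA_edge 3.
Proof.
exists ordA, clsA; split.
- move=> x y e; have := nth_index None (memLA x); rewrite /ordA in e.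
  by rewrite e nth_index // memLA.
- have H : all (fun r => all (fun s => all (fun t => Pc r s t) LA) LA) LA.
    by vm_cast_no_check (erefl true).
  move=> r s t h1 h2 h3.
  move/allP: H => /(_ r (memLA r)) /allP /(_ s (memLA s)) /allP /(_ t (memLA t)).
  rewrite /Pc h1 h2 h3 /= => /andP [a b]; split=> e.
    by apply: (implyP a); apply/eqP.
  by apply: (implyP b); apply/eqP.
Qed.

Theorem proposition6 : pthin_eq TA_edge 3.
Proof. split; [exact: upper | exact: lower]. Qed.
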